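(* In the 2-sided error regime, there exists an algorithm that, given a moldgraph with $m$ edges, finds a realized spanning tree with high probability using $O(m\log m)$ queries. Moreover, no algorithm can do better than $\Omega(m\log m)$ queries.
   Context: Problem (graph connectivity with noisy queries): a graph $G=(V,E)$, the moldgraph, with $n$ vertices and $m$ edges is given. An adversary selects an arbitrary connected spanning subgraph $G'$ of $G$ to be realized; its edges are called realized. The algorithm does not observe $G'$, but may query an oracle on any edge $e\in E$ (``Is $e$ realized?''), receiving ``Yes'' or ``No''; each query costs $1$, and answers to distinct queries (including repeated queries of the same edge) are independent random. The goal is to output a spanning tree of $G$ all of whose edges are realized, using as few queries as possible. In the 2-sided error regime, each answer is wrong (``No'' for a realized edge, ``Yes'' for a non-realized edge) with a constant probability $p<1/2$. ``With high probability'' means with probability tending to $1$ as $m\to\infty$. The lower bound is a worst-case statement over moldgraphs and realized subgraphs, for algorithms succeeding with constant failure probability. *)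

(* Defs.v *)
From mathcomp Require Import all_boot.
From Stdlib Require Import Reals.
Set Implicit Arguments. Unset Strict Implicit. Unset Printing Implicit Defensive.

Definition simple_graph (n m : nat) (ends : 'I_m -> 'I_n * 'I_n) : Prop :=
  (forall e, (ends e).1 <> (ends e).2) /\
  (forall e1 e2, ends e1 = ends e2 \/ ends e1 = ((ends e2).2, (ends e2).1) ->
                 e1 = e2).

Definition adj (n m : nat) (ends : 'I_m -> 'I_n * 'I_n) (S : {set 'I_m})
  : rel 'I_n :=
  fun u v => [exists e in S, (ends e == (u, v)) || (ends e == (v, u))].

Definition spanning_connected (n m : nat) (ends : 'I_m -> 'I_n * 'I_n)
  (S : {set 'I_m}) : bool :=
  [forall u : 'I_n, forall v : 'I_n, connect (adj ends S) u v].

(* (V, S) has no cycle: no edge of S lies on a cycle of S, i.e. removing any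
   edge of S disconnects its endpoints in S. *)
Definition acyclic (n m : nat) (ends : 'I_m -> 'I_n * 'I_n)
  (S : {set 'I_m}) : bool :=
  [forall e in S, ~~ connect (adj ends (S :\ e)) (ends e).1 (ends e).2].

Definition spanning_tree (n m : nat) (ends : 'I_m -> 'I_n * 'I_n)
  (T : {set 'I_m}) : bool :=
  spanning_connected ends T && acyclic ends T.

(* Randomized adaptive query algorithms for a moldgraph with m edges, as
   finite decision trees:
   - Output T : stop and output the edge set T;
   - Query e k : query the oracle on edge e, continue with k answer
     (answer true = "Yes");
   - Coin q k : internal random coin, true with probability q (clamped to
     [0,1]), continue with k outcome. *)
Inductive alg (m : nat) : Type :=
| Output of {set 'I_m}
| Query of 'I_m & (bool -> alg m)
| Coin of R & (bool -> alg m).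

Definition clamp01 (q : R) : R := Rmax 0 (Rmin 1 q).

Fixpoint queries (m : nat) (A : alg m) : nat :=
  match A with
  | Output _ => 0
  | Query _ k => (maxn (queries (k true)) (queries (k false))).+1
  | Coin _ k => maxn (queries (k true)) (queries (k false))
  end.

(* Probability that algorithm A outputs a spanning tree of the moldgraph all
   of whose edges are realized, when the realized edge set is Real and each
   oracle answer is independently wrong with probability p (2-sided error). *)
Fixpoint success (p : R) (n m : nat) (ends : 'I_m -> 'I_n * 'I_n)
  (Real : {set 'I_m}) (A : alg m) : R :=
  match A with
  | Output T =>
      if spanning_tree ends T && (T \subset Real)
      then 1%R else 0%R
  | Query e k =>
      ((1 - p) * success p ends Real (k (e \in Real))
       + p * success p ends Real (k (~~ (e \in Real))))%R
  | Coin q k =>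
      (clamp01 q * success p ends Real (k true)
       + (1 - clamp01 q) * success p ends Real (k false))%R
  end.

(* Main.v *)
Require Import Defs.
From mathcomp Require Import all_boot.
From Stdlib Require Import Reals.
From Stdlib Require Import Lra Lia Classical.
From HB Require Import structures.
From mathcomp Require Import zify.
Set Implicit Arguments. Unset Strict Implicit. Unset Printing Implicit Defensive.

Section Gen.
Variables (p : R) (n m : nat) (ends : 'I_m -> 'I_n * 'I_n).
Hypothesis hp0 : (0 <= p)%R.
Hypothesis hp1 : (p <= 1)%R.

Lemma clamp01_bounds q : (0 <= clamp01 q <= 1)%R.
Proof.
rewrite /clamp01; split.
- apply Rmax_l.
- apply Rmax_lub; [lra|apply Rmin_l].
Qed.

Lemma success_bounds (Real : {set 'I_m}) (A : alg m) :
  (0 <= success p ends Real A <= 1)%R.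
Proof.
elim: A => [T|e k IH|q k IH] /=.
- case: ifP => _; lra.
- move: (IH (e \in Real)) (IH (~~ (e \in Real))).
  set a := success _ _ _ _; set b := success _ _ _ _ => Ha Hb.
  have h1 : (0 <= (1 - p) * a)%R by apply Rmult_le_pos; lra.
  have h2 : (0 <= p * b)%R by apply Rmult_le_pos; lra.
  have h3 : ((1 - p) * a <= 1 - p)%R by rewrite -{2}(Rmult_1_r (1 - p)); apply Rmult_le_compat_l; lra.
  have h4 : (p * b <= p)%R by rewrite -{2}(Rmult_1_r p); apply Rmult_le_compat_l; lra.
  lra.
- move: (IH true) (IH false) (clamp01_bounds q).
  set a := success _ _ _ _; set b := success _ _ _ _; set c := clamp01 q => Ha Hb Hc.
  have h1 : (0 <= c * a)%R by apply Rmult_le_pos; lra.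
  have h2 : (0 <= (1 - c) * b)%R by apply Rmult_le_pos; lra.
  have h3 : (c * a <= c)%R by rewrite -{2}(Rmult_1_r c); apply Rmult_le_compat_l; lra.
  have h4 : ((1 - c) * b <= 1 - c)%R by rewrite -{2}(Rmult_1_r (1 - c)); apply Rmult_le_compat_l; lra.
  lra.
Qed.

Lemma adj_sym S : symmetric (adj ends S).
Proof.
move=> u v; rewrite /adj; apply/existsP/existsP => -[e He]; exists e;
  by rewrite orbC.
Qed.

Definition treeOf (S : {set 'I_m}) : {set 'I_m} :=
  [arg min_(T < S | (T \subset S) && spanning_connected ends T) #|T|].

Lemma remove_edge_conn (T : {set 'I_m}) e :
  e \in T -> connect (adj ends (T :\ e)) (ends e).1 (ends e).2 ->
  forall u v, connect (adj ends T) u v -> connect (adj ends (T :\ e)) u v.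
Proof.
move=> eT Hc u v; apply: connect_sub => x y /existsP [e' /andP [e'T He']].
have csym : connect_sym (adj ends (T :\ e)) by apply: sym_connect_sym; apply: adj_sym.
case: (eqVneq e' e) => [Hee|ne]; first subst e'.
- case/orP: He' => /eqP He; rewrite He /= in Hc; first by [].
  by rewrite csym.
- apply: connect1; apply/existsP; exists e'; rewrite He' andbT.
  by rewrite !inE ne.
Qed.

Lemma treeOfP S : spanning_connected ends S ->
  spanning_tree ends (treeOf S) && (treeOf S \subset S).
Proof.
move=> HS; rewrite /treeOf.
case: (@arg_minnP _ S (fun T : {set 'I_m} => (T \subset S) && spanning_connected ends T) (fun T : {set 'I_m} => #|T|)).
  by rewrite subxx HS.
move=> T /andP [TS Tc] Hmin.
rewrite /spanning_tree Tc TS /= andbT.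
apply/forallP => e; apply/implyP => eT; apply/negP => Hc.
have Tc' : spanning_connected ends (T :\ e).
  apply/forallP => u; apply/forallP => v.
  apply: remove_edge_conn => //.
  by move/forallP: Tc => /(_ u) /forallP /(_ v).
have := Hmin (T :\ e); rewrite Tc' andbT.
have -> : T :\ e \subset S by apply: subset_trans TS; apply: subsetDl.
move=> /(_ isT); rewrite (cardsD1 e T) eT.
by rewrite add1n ltnn.
Qed.

End Gen.

Lemma pow_le1 (z : R) d : (0 <= z <= 1)%R -> (0 <= z ^ d <= 1)%R.
Proof.
move=> Hz; split; first by apply pow_le; lra.
rewrite -(pow1 d); apply pow_incr; lra.
Qed.

Lemma pow_decr (z : R) y w : (0 <= z <= 1)%R -> (y <= w)%N -> (z ^ w <= z ^ y)%R.
Proof.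
move=> Hz /subnKC <-; rewrite pow_add.
have := pow_le1 (w - y) Hz; have := pow_le1 y Hz; nra.
Qed.

Section Vote.
Variables (p : R) (n m : nat) (ends : 'I_m -> 'I_n * 'I_n).
Hypothesis hp0 : (0 <= p)%R.
Hypothesis hp1 : (p <= 1)%R.

Fixpoint vote (e : 'I_m) (j y w : nat) (cont : bool -> alg m) : alg m :=
  match j with
  | 0 => cont (w < y)%N
  | j'.+1 => Query e (fun a => if a then vote e j' y.+1 w cont
                                 else vote e j' y w.+1 cont)
  end.

Lemma vote_success (Real : {set 'I_m}) (e : 'I_m) (cont : bool -> alg m) (z : R) j y w (b : bool) :
  (0 < z <= 1)%R -> b = (e \in Real) ->
  ((1 - ((1 - p) * z + p / z) ^ j * z ^ (if b then y else w)
          / z ^ (if b then w else y)) * success p ends Real (cont b)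
   <= success p ends Real (vote e j y w cont))%R.
Proof.
move=> Hz Hb.
have Sb := success_bounds ends hp0 hp1 Real (cont b).
elim: j y w => [|j IH] y w /=.
- have Hzy : (0 < z ^ y)%R by apply pow_lt; lra.
  have Hzw : (0 < z ^ w)%R by apply pow_lt; lra.
  case: (ltnP w y) => H; case: b Hb Sb => Hb Sb /=.
  + have : (0 <= z ^ y / z ^ w)%R by apply Rle_mult_inv_pos; lra.
    rewrite Rmult_1_l; nra.
  + have : (1 <= z ^ w / z ^ y)%R.
      apply (Rmult_le_reg_r (z ^ y)) => //; rewrite Rmult_1_l /Rdiv Rmult_assoc Rinv_l; last lra.
      rewrite Rmult_1_r; apply pow_decr; [lra|exact: ltnW].
    have := success_bounds ends hp0 hp1 Real (cont true).
    rewrite Rmult_1_l; nra.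
  + have : (1 <= z ^ y / z ^ w)%R.
      apply (Rmult_le_reg_r (z ^ w)) => //; rewrite Rmult_1_l /Rdiv Rmult_assoc Rinv_l; last lra.
      rewrite Rmult_1_r; apply pow_decr; [lra|exact: H].
    have := success_bounds ends hp0 hp1 Real (cont false).
    rewrite Rmult_1_l; nra.
  + have : (0 <= z ^ w / z ^ y)%R by apply Rle_mult_inv_pos; lra.
    rewrite Rmult_1_l; nra.
- rewrite -Hb.
  have IH1 := IH y.+1 w; have IH2 := IH y w.+1; clear IH.
  have Hzy : (0 < z ^ y)%R by apply pow_lt; lra.
  have Hzw : (0 < z ^ w)%R by apply pow_lt; lra.
  have Hzn : z <> 0%R by lra.
  case: b Hb IH1 IH2 Sb => Hb /= IH1 IH2 Sb.
  + set S := success p ends Real (cont _) in Sb IH1 IH2 *.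
    set f := ((1 - p) * z + p / z)%R in IH1 IH2 *.
    set X1 := success _ _ _ (vote e j y.+1 w cont) in IH1 *.
    set X2 := success _ _ _ (vote e j y w.+1 cont) in IH2 *.
    apply (Rle_trans _ ((1 - p) * ((1 - f ^ j * (z * z ^ y) / z ^ w) * S) +
                        p * ((1 - f ^ j * z ^ y / (z * z ^ w)) * S)))%R.
    * right; rewrite /f; field; lra.
    * apply Rplus_le_compat; apply Rmult_le_compat_l; lra.
  + set S := success p ends Real (cont _) in Sb IH1 IH2 *.
    set f := ((1 - p) * z + p / z)%R in IH1 IH2 *.
    set X1 := success _ _ _ (vote e j y.+1 w cont) in IH1 *.
    set X2 := success _ _ _ (vote e j y w.+1 cont) in IH2 *.
    apply (Rle_trans _ ((1 - p) * ((1 - f ^ j * (z * z ^ w) / z ^ y) * S) +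
                        p * ((1 - f ^ j * z ^ w / (z * z ^ y)) * S)))%R.
    * right; rewrite /f; field; lra.
    * apply Rplus_le_compat; apply Rmult_le_compat_l; lra.
Qed.

Lemma vote_queries e j y w cont Q :
  (forall b, (queries (cont b) <= Q)%N) -> (queries (vote e j y w cont) <= j + Q)%N.
Proof.
move=> H; elim: j y w => [|j IH] y w /=; first exact: H.
by rewrite ltnS geq_max !IH.
Qed.

Variable k : nat.

Fixpoint run (es : seq 'I_m) (acc : {set 'I_m}) : alg m :=
  match es with
  | [::] => Output (treeOf ends acc)
  | e :: es' => vote e k 0 0 (fun b => run es' (if b then e |: acc else acc))
  end.

Lemma run_queries es acc : (queries (run es acc) <= size es * k)%N.
Proof.
elim: es acc => [|e es IH] acc //=.
by rewrite mulSn; apply: vote_queries => b; apply: IH.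
Qed.

Lemma run_success (Real : {set 'I_m}) (z X : R) (es : seq 'I_m) (acc : {set 'I_m}) :
  (0 < z <= 1)%R -> (((1 - p) * z + p / z) ^ k = X)%R -> (0 <= X <= 1)%R ->
  ((1 - X) ^ size es *
     success p ends Real (Output (treeOf ends (acc :|: [set x | x \in es & x \in Real])))
   <= success p ends Real (run es acc))%R.
Proof.
move=> Hz HX HX1.
elim: es acc => [|e es IH] acc /=.
- rewrite Rmult_1_l.
  have -> : acc :|: [set x | x \in [::] & x \in Real] = acc.
    by apply/setP => x; rewrite !inE /= orbF.
  lra.
- have V := @vote_success Real e (fun b => run es (if b then e |: acc else acc)) z k 0 0 (e \in Real) Hz (erefl _).
  rewrite !if_same /= /Rdiv Rinv_1 !Rmult_1_r HX in V.
  apply: Rle_trans V.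
  rewrite Rmult_assoc; apply Rmult_le_compat_l; first lra.
  apply: Rle_trans (IH _).
  have -> : (if e \in Real then e |: acc else acc) :|: [set x | x \in es & x \in Real]
           = acc :|: [set x | x \in e :: es & x \in Real].
    apply/setP => x; rewrite !inE.
    case: (eqVneq x e) => [->|ne] /=; case: (e \in Real); rewrite ?inE ?eqxx ?andbF ?andbT ?orbF ?orbT ?(negbTE ne) //=.
  by apply Rle_refl.
Qed.

End Vote.

Lemma ln_le' (x y : R) : (0 < x)%R -> (x <= y)%R -> (ln x <= ln y)%R.
Proof. move=> hx [h|->]; [left; exact: ln_increasing | lra]. Qed.

Lemma bernoulli_ineq (X : R) m : (0 <= X <= 1)%R -> (1 - INR m * X <= (1 - X) ^ m)%R.
Proof.
move=> HX; elim: m => [|m IH]; first by rewrite /=; lra.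
rewrite S_INR; change ((1 - X) ^ m.+1)%R with ((1 - X) * (1 - X) ^ m)%R.
have h : (0 <= X * X * INR m)%R.
  apply Rmult_le_pos; [nra| apply pos_INR].
have := Rmult_le_compat_l (1 - X) _ _ ltac:(lra) IH. nra.
Qed.

Lemma log2_ln m : (3 <= m)%N -> (INR (Nat.log2 m).+1 <= 3 * ln (INR m))%R.
Proof.
move=> Hm.
have Hm0 : (0 < INR m)%R by apply lt_0_INR; apply/ltP; lia.
have H1 : (1 <= ln (INR m))%R.
  rewrite -(ln_exp 1); apply ln_le'; first exact: exp_pos.
  have := exp_le_3; have : (3 <= INR m)%R by have := le_INR 3 m; move/(_ (ltac:(apply/leP; exact Hm))); rewrite /=; lra.
  lra.
have H2 : (INR (Nat.log2 m) * ln 2 <= ln (INR m))%R.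
  rewrite -ln_pow; last lra.
  apply ln_le'; first by apply pow_lt; lra.
  have [h _] := Nat.log2_spec m ltac:(apply/ltP; lia).
  have := le_INR _ _ h; rewrite pow_INR; replace (INR 2) with 2%R by (simpl; lra); lra.
have := ln_lt_2; rewrite S_INR => h2.
have := Rmult_le_compat_l (INR (Nat.log2 m)) _ _ (pos_INR _) (Rlt_le _ _ h2). lra.
Qed.

Lemma inv_S_cv : Un_cv (fun m => / INR m.+1)%R 0%R.
Proof.
move=> eps Heps.
have [N [HN HN0]] := archimed_cor1 eps Heps.
exists N => k Hk; rewrite /R_dist Rminus_0_r Rabs_right; last first.
  apply Rle_ge, Rlt_le, Rinv_0_lt_compat, lt_0_INR; lia.
apply: Rle_lt_trans HN.
apply Rinv_le_contravar; first by apply lt_0_INR.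
apply le_INR; lia.
Qed.

Theorem upper_bound (p : R) (hp : (0 < p < 1/2)%R) :
  exists (C : R) (M : nat) (eps : nat -> R),
     Un_cv eps 0 /\
     forall (n m : nat) (ends : 'I_m -> 'I_n * 'I_n),
       simple_graph ends -> (M <= m)%N ->
       exists A : alg m,
         (INR (queries A) <= C * INR m * ln (INR m))%R /\
         forall Real : {set 'I_m}, spanning_connected ends Real ->
           (1 - eps m <= success p ends Real A)%R.
Proof.
have hp0 : (0 <= p)%R by lra.
have hp1 : (p <= 1)%R by lra.
set r0 := (4 * p * (1 - p))%R.
have Hr0 : (0 < r0 < 1)%R by rewrite /r0; nra.
have [L HL] := pow_lt_1_zero r0 ltac:(rewrite Rabs_right; lra) (/4)%R ltac:(lra).
have {}HL : (0 <= r0 ^ L <= /4)%R.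
  have := HL L (le_n _); rewrite Rabs_right; last by apply Rle_ge, pow_le; lra.
  by have := pow_le r0 L ltac:(lra); lra.
set z := sqrt (p / (1 - p)).
have Hz : (0 < z <= 1)%R.
  split; first by apply sqrt_lt_R0; apply Rdiv_lt_0_compat; lra.
  rewrite -sqrt_1; left; apply sqrt_lt_1; try lra.
  - apply Rle_mult_inv_pos; lra.
  - apply (Rmult_lt_reg_r (1 - p)); first lra.
    rewrite /Rdiv Rmult_assoc Rinv_l; lra.
have Hzz : (z * z = p / (1 - p))%R by apply sqrt_sqrt; apply Rle_mult_inv_pos; lra.
have Hphi : (((1 - p) * z + p / z) ^ 2 = r0)%R.
  rewrite /r0 /= Rmult_1_r.
  have Hzn : z <> 0%R by lra.
  have E : (((1 - p) * z + p / z) * ((1 - p) * z + p / z) =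
            (1 - p) * (1 - p) * (z * z) + 2 * p * (1 - p) + p * p / (z * z))%R
    by field.
  rewrite E Hzz; field; lra.
exists (6 * INR L)%R, 3, (fun m => / INR m.+1)%R; split; first exact: inv_S_cv.
move=> n m ends _ Hm.
set s := (Nat.log2 m).+1.
set k := (2 * (L * s))%N.
set X := (r0 ^ (L * s))%R.
have HX : (((1 - p) * z + p / z) ^ k = X)%R by rewrite /k pow_mult Hphi.
have HX1 : (0 <= X <= /4 ^ s)%R.
  rewrite /X pow_mult -pow_inv; split; first by apply pow_le; lra.
  by apply pow_incr.
have H2s : (m.+1 <= 2 ^ s)%N.
  have [_ h] := Nat.log2_spec m ltac:(apply/ltP; lia).
  by apply/leP; move: h; rewrite /s; case: (Nat.log2 m) => [|l] //.
have HmX : (INR m * X <= / INR m.+1)%R.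
  have Pq : (INR m.+1 <= 2 ^ s)%R by rewrite -(pow_INR 2); apply le_INR; apply/leP.
  have q0 : (0 < INR m.+1)%R by apply lt_0_INR; lia.
  have h4 : (4 ^ s = 2 ^ s * 2 ^ s)%R by rewrite -Rpow_mult_distr; do 2 f_equal; lra.
  apply (Rle_trans _ (INR m.+1 * / (INR m.+1 * INR m.+1))); last first.
    right; field; lra.
  apply Rmult_le_compat.
  - apply pos_INR.
  - lra.
  - rewrite S_INR; lra.
  - apply: (Rle_trans _ _ _ (proj2 HX1)); rewrite h4.
    apply Rinv_le_contravar; first nra.
    apply Rmult_le_compat; lra.
exists (run ends k (enum 'I_m) set0); split.
- apply (Rle_trans _ (INR (m * k))).
    apply le_INR; apply/leP; have := run_queries ends k (enum 'I_m) set0.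
    by rewrite size_enum_ord.
  rewrite /k !mult_INR.
  have h := Rmult_le_compat_l (INR L * INR m) _ _
     (Rmult_le_pos _ _ (pos_INR L) (pos_INR m)) (log2_ln Hm).
  rewrite -/s in h; replace (INR 2) with 2%R by (simpl; lra); lra.
- move=> Real HR.
  have HX01 : (0 <= X <= 1)%R.
    split; first lra.
    apply: (Rle_trans _ _ _ (proj2 HX1)).
    rewrite -pow_inv; have := pow_le1 s (ltac:(lra) : (0 <= /4 <= 1)%R); lra.
  have H := run_success ends hp0 hp1 Real (enum 'I_m) set0 Hz HX HX01.
  rewrite size_enum_ord in H.
  have E : set0 :|: [set x | x \in enum 'I_m & x \in Real] = Real.
    by apply/setP => x; rewrite !inE mem_enum.
  rewrite E in H.
  have := treeOfP HR; case/andP => h1 h2; rewrite /= h1 h2 /= in H.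
  have := bernoulli_ineq m HX01. lra.
Qed.

Section Pot.
Variable p : R.
Hypothesis hp : (0 < p < 1/2)%R.
Variable K : nat.

Definition rho : R := (p / (1 - p))%R.
Definition epsK : R := (rho ^ K * (1 - rho) / rho)%R.
Definition lam : R := (1 + epsK)%R.
Definition J (k : nat) : R := ((1 + rho ^ k) / lam ^ (K - k))%R.
Definition P2 : R := (p * (1 - p))%R.
Definition Gk (a k : nat) : R := (P2 ^ a * (1 - p) ^ k * J k)%R.
Definition dist (y w : nat) : nat := (y - w) + (w - y).
Definition G (y w : nat) : R := Gk (minn y w) (dist y w).
Definition wbit (y w : nat) (b : bool) : R :=
  if b then ((1 - p) ^ y * p ^ w)%R else (p ^ y * (1 - p) ^ w)%R.

Lemma rho_bounds : (0 < rho < 1)%R.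
Proof.
rewrite /rho; split; first by apply Rdiv_lt_0_compat; lra.
apply (Rmult_lt_reg_r (1 - p)); first lra.
rewrite /Rdiv Rmult_assoc Rinv_l; lra.
Qed.

Lemma rhoK_bounds : (0 < rho ^ K <= 1)%R.
Proof.
have := rho_bounds => h; split; first by apply pow_lt; lra.
rewrite -(pow1 K); apply pow_incr; lra.
Qed.

Lemma eps_pos : (0 < epsK)%R.
Proof.
have := rho_bounds; have := rhoK_bounds => h1 h2.
rewrite /epsK; apply Rdiv_lt_0_compat; last lra.
apply Rmult_lt_0_compat; lra.
Qed.

Lemma lam_ge1 : (1 <= lam)%R.
Proof. have := eps_pos; rewrite /lam; lra. Qed.

Lemma lam_pow_pos j : (0 < lam ^ j)%R.
Proof. apply pow_lt; have := lam_ge1; lra. Qed.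

Lemma rho_lam : (rho * lam <= 1)%R.
Proof.
have := rho_bounds; have := rhoK_bounds => h1 h2.
have E : (rho * lam = rho + rho ^ K * (1 - rho))%R.
  rewrite /lam /epsK; field; lra.
rewrite E.
have : (rho ^ K * (1 - rho) <= 1 - rho)%R.
  rewrite -{2}(Rmult_1_l (1 - rho)); apply Rmult_le_compat_r; lra.
lra.
Qed.

Lemma aux_pow j : (rho ^ j * (lam ^ j - 1) <= rho ^ K * (1 - rho ^ j))%R.
Proof.
have := rho_bounds; have := rhoK_bounds => h1 h2.
elim: j => [|j IH]; first by rewrite /=; lra.
change (rho ^ j.+1)%R with (rho * rho ^ j)%R.
change (lam ^ j.+1)%R with (lam * lam ^ j)%R.
have hl := lam_ge1. have hrl := rho_lam.
have hj : (0 < rho ^ j)%R by apply pow_lt; lra.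
have hlj := lam_pow_pos j.
have E : (rho * rho ^ j * (lam * lam ^ j - 1) =
          (rho * lam) * (rho ^ j * (lam ^ j - 1)) + rho * rho ^ j * (lam - 1))%R by ring.
rewrite E.
have E2 : (rho * (lam - 1) = rho ^ K * (1 - rho))%R by rewrite /lam /epsK; field; lra.
have h3 : (0 <= rho ^ j * (lam ^ j - 1))%R.
  apply Rmult_le_pos; first lra.
  have : (1 <= lam ^ j)%R by rewrite -(pow1 j); apply pow_incr; lra.
  lra.
have h4 : ((rho * lam) * (rho ^ j * (lam ^ j - 1)) <= rho ^ j * (lam ^ j - 1))%R.
  rewrite -{2}(Rmult_1_l (rho ^ j * _)); apply Rmult_le_compat_r; lra.
have E3 : (rho * rho ^ j * (lam - 1) = rho ^ j * (rho ^ K * (1 - rho)))%R.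
  by rewrite -E2; ring.
rewrite E3. nra.
Qed.

Lemma J_ge1 k : (1 <= J k)%R.
Proof.
have := rho_bounds => hr.
rewrite /J; have hl := lam_pow_pos (K - k).
apply (Rmult_le_reg_r (lam ^ (K - k))) => //.
rewrite /Rdiv Rmult_assoc Rinv_l; last lra.
rewrite Rmult_1_r Rmult_1_l.
case: (leqP K k) => Hk.
  have -> : (K - k = 0)%N by lia.
  have := pow_le rho k ltac:(lra); rewrite /=; lra.
set j := (K - k)%N.
have HK : K = (k + j)%N by rewrite /j; lia.
have := aux_pow j; rewrite {1}HK pow_add.
have hj : (0 < rho ^ j)%R by apply pow_lt; lra.
have hk : (0 < rho ^ k)%R by apply pow_lt; lra.
have h1 : (0 <= 1 - rho ^ j)%R.
  have : (rho ^ j <= 1)%R by rewrite -(pow1 j); apply pow_incr; lra.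
  lra.
move=> H.
have H' : (rho ^ j * (lam ^ j - 1) <= rho ^ j * rho ^ k)%R.
  apply: (Rle_trans _ _ _ H).
  have hjk : (0 < rho ^ k * rho ^ j)%R by nra.
  have hh : (0 <= rho ^ j)%R by lra.
  nra.
have := Rmult_le_reg_l _ _ _ hj H'. lra.
Qed.

Lemma J_pos k : (0 < J k)%R.
Proof. have := J_ge1 k; lra. Qed.

Lemma lam_shift a b : (a <= b.+1)%N -> (/ lam ^ b <= lam / lam ^ a)%R.
Proof.
move=> H.
have ha := lam_pow_pos a; have hb := lam_pow_pos b.
have : (lam ^ a <= lam ^ b.+1)%R by apply Rle_pow; [exact: lam_ge1|apply/leP].
change (lam ^ b.+1)%R with (lam * lam ^ b)%R => h.
apply (Rmult_le_reg_r (lam ^ a * lam ^ b)); first nra.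
have E1 : (/ lam ^ b * (lam ^ a * lam ^ b) = lam ^ a)%R by field; lra.
have E2 : (lam / lam ^ a * (lam ^ a * lam ^ b) = lam * lam ^ b)%R by field; lra.
rewrite E1 E2; lra.
Qed.

Lemma lam_mono a b : (a <= b)%N -> (/ lam ^ b <= / lam ^ a)%R.
Proof.
move=> H; apply Rinv_le_contravar; first exact: lam_pow_pos.
by apply Rle_pow; [exact: lam_ge1|apply/leP].
Qed.

Lemma J2 : (2 * (1 - p) * J 1 <= lam * J 0)%R.
Proof.
rewrite /J.
have E : ((1 - p) * (1 + rho) = 1)%R by rewrite /rho; field; lra.
have := lam_shift (a := K) (b := K - 1) ltac:(lia).
have := lam_pow_pos (K - 1); have := lam_pow_pos K; have := lam_ge1.
rewrite subn0 /= Rmult_1_r => h1 h2 h3 h4.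
have E2 : (2 * (1 - p) * ((1 + rho) / lam ^ (K - 1)) = 2 * / lam ^ (K - 1))%R.
  rewrite /Rdiv; transitivity (2 * ((1 - p) * (1 + rho)) * / lam ^ (K - 1))%R; first ring.
  rewrite E; ring.
rewrite E2.
have E3 : (lam * ((1 + 1) / lam ^ K) = 2 * (lam / lam ^ K))%R by field; lra.
rewrite E3; lra.
Qed.

Lemma J3 k : ((1 - p) * J k.+2 + p * J k <= lam * J k.+1)%R.
Proof.
rewrite /J.
have hr := rho_bounds.
have hk : (0 <= rho ^ k)%R by apply pow_le; lra.
have s1 := lam_shift (a := K - k.+1) (b := K - k.+2) ltac:(lia).
have s2 := lam_mono (a := K - k.+1) (b := K - k) ltac:(lia).
have s3 : (/ lam ^ (K - k) <= lam / lam ^ (K - k.+1))%R.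
  apply: (Rle_trans _ _ _ s2).
  have := lam_pow_pos (K - k.+1); have := lam_ge1 => h1 h2.
  rewrite /Rdiv -{1}(Rmult_1_l (/ _)); apply Rmult_le_compat_r; last lra.
  by apply Rlt_le, Rinv_0_lt_compat.
set u := (/ lam ^ (K - k.+2))%R in s1 *.
set v := (/ lam ^ (K - k))%R in s3 *.
set t := (lam / lam ^ (K - k.+1))%R in s1 s3 *.
have E : ((1 - p) * (1 + rho ^ k.+2) + p * (1 + rho ^ k) = 1 + rho ^ k.+1)%R.
  change (rho ^ k.+2)%R with (rho * (rho * rho ^ k))%R.
  change (rho ^ k.+1)%R with (rho * rho ^ k)%R.
  rewrite /rho; field; lra.
have E2 : (lam * ((1 + rho ^ k.+1) / lam ^ (K - k.+1)) = (1 + rho ^ k.+1) * t)%R.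
  by rewrite /t /Rdiv; ring.
rewrite /Rdiv -/u -/v E2 -E.
have a1 : (0 <= (1 - p) * (1 + rho ^ k.+2))%R.
  apply Rmult_le_pos; first lra. have := pow_le rho k.+2 ltac:(lra); lra.
have a2 : (0 <= p * (1 + rho ^ k))%R by apply Rmult_le_pos; lra.
have := Rmult_le_compat_l _ _ _ a1 s1.
have := Rmult_le_compat_l _ _ _ a2 s3.
lra.
Qed.

Lemma Gk_pos a k : (0 <= Gk a k)%R.
Proof.
rewrite /Gk; have := J_pos k => h.
apply Rmult_le_pos; last lra.
apply Rmult_le_pos; apply pow_le; rewrite /P2; nra.
Qed.

Lemma G_pos y w : (0 <= G y w)%R.
Proof. exact: Gk_pos. Qed.

Lemma Gk_step a k : (Gk a k.+2 + Gk a.+1 k <= lam * Gk a k.+1)%R.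
Proof.
rewrite /Gk.
have := J3 k.
have h : (0 <= P2 ^ a * (1 - p) ^ k.+1)%R.
  apply Rmult_le_pos; apply pow_le; rewrite /P2; nra.
move/(Rmult_le_compat_l _ _ _ h).
change (P2 ^ a.+1)%R with (P2 * P2 ^ a)%R.
change ((1 - p) ^ k.+2)%R with ((1 - p) * (1 - p) ^ k.+1)%R.
change ((1 - p) ^ k.+1)%R with ((1 - p) * (1 - p) ^ k)%R.
rewrite /P2 => H.
apply: Rle_trans _ (Rle_trans _ _ _ H _); right; ring.
Qed.

Lemma Gk_step0 a : (Gk a 1 + Gk a 1 <= lam * Gk a 0)%R.
Proof.
rewrite /Gk.
have := J2.
have h : (0 <= P2 ^ a)%R by apply pow_le; rewrite /P2; nra.
move/(Rmult_le_compat_l _ _ _ h) => H.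
apply: Rle_trans _ (Rle_trans _ _ _ H _); right; rewrite /=; ring.
Qed.

Lemma G_step y w : (G y.+1 w + G y w.+1 <= lam * G y w)%R.
Proof.
rewrite /G /dist.
case: (ltngtP y w) => H.
-
  have E_ : minn y.+1 w = y.+1 by lia. rewrite ?E_ {E_}.
  have E_ : minn y w.+1 = y by lia. rewrite ?E_ {E_}.
  have E_ : minn y w = y by lia. rewrite ?E_ {E_}.
  have E_ : (y.+1 - w + (w - y.+1) = (w - y.+1))%N by lia. rewrite ?E_ {E_}.
  have E_ : (y - w.+1 + (w.+1 - y) = (w - y.+1).+2)%N by lia. rewrite ?E_ {E_}.
  have E_ : (y - w + (w - y) = (w - y.+1).+1)%N by lia. rewrite ?E_ {E_}.
  rewrite Rplus_comm; exact: Gk_step.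
- have E_ : minn y.+1 w = w by lia. rewrite ?E_ {E_}.
  have E_ : minn y w.+1 = w.+1 by lia. rewrite ?E_ {E_}.
  have E_ : minn y w = w by lia. rewrite ?E_ {E_}.
  have E_ : (y.+1 - w + (w - y.+1) = (y - w.+1).+2)%N by lia. rewrite ?E_ {E_}.
  have E_ : (y - w.+1 + (w.+1 - y) = (y - w.+1))%N by lia. rewrite ?E_ {E_}.
  have E_ : (y - w + (w - y) = (y - w.+1).+1)%N by lia. rewrite ?E_ {E_}.
  exact: Gk_step.
- subst w.
  have E_ : minn y.+1 y = y by lia. rewrite ?E_ {E_}.
  have E_ : minn y y.+1 = y by lia. rewrite ?E_ {E_}.
  have E_ : minn y y = y by lia. rewrite ?E_ {E_}.
  have E_ : (y.+1 - y + (y - y.+1) = 1)%N by lia. rewrite ?E_ {E_}.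
  have E_ : (y - y.+1 + (y.+1 - y) = 1)%N by lia. rewrite ?E_ {E_}.
  have E_ : (y - y + (y - y) = 0)%N by lia. rewrite ?E_ {E_}.
  exact: Gk_step0.
Qed.

Lemma pw_eq a d : ((1 - p) ^ (a + d) * p ^ a = P2 ^ a * (1 - p) ^ d)%R.
Proof. rewrite pow_add /P2 Rpow_mult_distr; ring. Qed.

Lemma pw_le a d : ((1 - p) ^ a * p ^ (a + d) <= P2 ^ a * (1 - p) ^ d)%R.
Proof.
rewrite pow_add /P2 Rpow_mult_distr.
have h1 : (0 <= p ^ a * (1 - p) ^ a)%R by apply Rmult_le_pos; apply pow_le; lra.
have h2 : (p ^ d <= (1 - p) ^ d)%R by apply pow_incr; lra.
have := Rmult_le_compat_l _ _ _ h1 h2. lra.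
Qed.

Lemma wbit_le y w b : (0 <= wbit y w b <= G y w)%R.
Proof.
split.
  rewrite /wbit; case: b; apply Rmult_le_pos; apply pow_le; lra.
rewrite /G /Gk /dist.
have hJ := J_ge1 ((y - w) + (w - y)).
have hP : (0 <= P2 ^ minn y w * (1 - p) ^ (y - w + (w - y)))%R.
  apply Rmult_le_pos; apply pow_le; rewrite /P2; nra.
apply: (Rle_trans _ (P2 ^ minn y w * (1 - p) ^ (y - w + (w - y)))); last first.
  rewrite -{1}(Rmult_1_r (_ * _)); apply Rmult_le_compat_l; lra.
rewrite /wbit; case: (leqP w y) => H; case: b.
- have E_ : minn y w = w by lia. rewrite ?E_ {E_}.
  have E_ : (y - w + (w - y) = y - w)%N by lia. rewrite ?E_ {E_}.
  rewrite -pw_eq; have E_ : (w + (y - w) = y)%N by lia. rewrite ?E_ {E_}. lra.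
- have E_ : minn y w = w by lia. rewrite ?E_ {E_}.
  have E_ : (y - w + (w - y) = y - w)%N by lia. rewrite ?E_ {E_}.
  have := pw_le w (y - w); have E_ : (w + (y - w) = y)%N by lia. rewrite ?E_ {E_}. lra.
- have E_ : minn y w = y by lia. rewrite ?E_ {E_}.
  have E_ : (y - w + (w - y) = w - y)%N by lia. rewrite ?E_ {E_}.
  have := pw_le y (w - y); have E_ : (y + (w - y) = w)%N by lia. rewrite ?E_ {E_}. lra.
- have E_ : minn y w = y by lia. rewrite ?E_ {E_}.
  have E_ : (y - w + (w - y) = w - y)%N by lia. rewrite ?E_ {E_}.
  rewrite -pw_eq; have E_ : (y + (w - y) = w)%N by lia. rewrite ?E_ {E_}. lra.
Qed.

Lemma G00 : G 0 0 = (2 / lam ^ K)%R.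
Proof. rewrite /G /Gk /J /dist /= add0n /Rdiv. rewrite (_ : (K - 0 = K)%N); last by lia. ring. Qed.

End Pot.

Lemma Rplus_assoc' : associative Rplus. Proof. by move=> x y z; rewrite Rplus_assoc. Qed.
Lemma Rmult_assoc' : associative Rmult. Proof. by move=> x y z; rewrite Rmult_assoc. Qed.
HB.instance Definition _ := Monoid.isComLaw.Build R R0 Rplus Rplus_assoc' Rplus_comm Rplus_0_l.
HB.instance Definition _ := Monoid.isComLaw.Build R R1 Rmult Rmult_assoc' Rmult_comm Rmult_1_l.

Section BigR.
Variable I : finType.
Implicit Types F G : I -> R.

Lemma rsum_le F G : (forall i, F i <= G i)%R ->
  (\big[Rplus/0%R]_(i : I) F i <= \big[Rplus/0%R]_(i : I) G i)%R.
Proof.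
move=> H; apply: (big_ind2 (fun x y => x <= y)%R); first lra.
  by move=> x1 x2 y1 y2 h1 h2; lra.
by move=> i _; apply: H.
Qed.

Lemma rsum_split F G :
  \big[Rplus/0%R]_(i : I) (F i + G i)%R =
  (\big[Rplus/0%R]_(i : I) F i + \big[Rplus/0%R]_(i : I) G i)%R.
Proof. exact: big_split. Qed.

Lemma rsum_scale (c : R) F :
  \big[Rplus/0%R]_(i : I) (c * F i)%R = (c * \big[Rplus/0%R]_(i : I) F i)%R.
Proof.
apply: (big_ind2 (fun x y => x = c * y)%R); first ring.
  by move=> x1 x2 y1 y2 -> ->; ring.
by [].
Qed.

Lemma rsum_const (c : R) :
  \big[Rplus/0%R]_(i : I) c = (INR #|I| * c)%R.
Proof.
rewrite big_const cardE; elim: (enum I) => [|x s IH]; first by rewrite /=; ring.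
rewrite [size (x :: s)]/= iterS IH S_INR; ring.
Qed.

Lemma rprod_le F G : (forall i, 0 <= F i <= G i)%R ->
  (0 <= \big[Rmult/1%R]_(i : I) F i <= \big[Rmult/1%R]_(i : I) G i)%R.
Proof.
move=> H; apply: (big_ind2 (fun x y => 0 <= x <= y)%R); first lra.
  move=> x1 x2 y1 y2 h1 h2; split; first nra.
  apply Rmult_le_compat; lra.
by move=> i _; apply: H.
Qed.

End BigR.

Lemma eqb_tt : (true == true) = true. Proof. by []. Qed.
Lemma eqb_ff : (false == false) = true. Proof. by []. Qed.
Lemma eqb_tf : (true == false) = false. Proof. by []. Qed.
Lemma eqb_ft : (false == true) = false. Proof. by []. Qed.

Section Core.
Variable p : R.
Hypothesis hp : (0 < p < 1/2)%R.
Variable K : nat.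
Variables (N m n : nat) (ends : 'I_m -> 'I_n * 'I_n).
Variable Real : {ffun 'I_N -> bool} -> {set 'I_m}.
Variable kind : 'I_m -> option ('I_N * bool).
Hypothesis Hkind : forall e X, (e \in Real X) =
  match kind e with None => true | Some (i, b) => X i == b end.
Hypothesis Huniq : forall T X X', spanning_tree ends T -> T \subset Real X ->
  T \subset Real X' -> X = X'.

Definition W (y w : 'I_N -> nat) (X : {ffun 'I_N -> bool}) : R :=
  \big[Rmult/1%R]_(i < N) wbit p (y i) (w i) (X i).
Definition PG (y w : 'I_N -> nat) : R :=
  \big[Rmult/1%R]_(i < N) G p K (y i) (w i).
Definition upd (f : 'I_N -> nat) (i : 'I_N) : 'I_N -> nat :=
  fun j => if j == i then (f j).+1 else f j.

Let hp0 : (0 <= p)%R. Proof. lra. Qed.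
Let hp1 : (p <= 1)%R. Proof. lra. Qed.

Lemma W_pos y w X : (0 <= W y w X)%R.
Proof. have [h _] := rprod_le (fun i => wbit_le hp K (y i) (w i) (X i)). exact: h. Qed.

Lemma W_le_PG y w X : (W y w X <= PG y w)%R.
Proof. have [_ h] := rprod_le (fun i => wbit_le hp K (y i) (w i) (X i)). exact: h. Qed.

Lemma PG_pos y w : (0 <= PG y w)%R.
Proof.
have [h _] := rprod_le (fun i => conj (G_pos hp K (y i) (w i)) (Rle_refl (G p K (y i) (w i)))).
exact: h.
Qed.

Lemma W_updy y w X i :
  W (upd y i) w X = (W y w X * (if X i then 1 - p else p))%R.
Proof.
rewrite /W (bigD1 i) //= [in RHS](bigD1 i) //=.
rewrite /upd eqxx.
have -> : \big[Rmult/1%R]_(j < N | j != i)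
            wbit p (if j == i then (y j).+1 else y j) (w j) (X j) =
          \big[Rmult/1%R]_(j < N | j != i) wbit p (y j) (w j) (X j).
  by apply: eq_bigr => j /negbTE ->.
rewrite /wbit; set Q := \big[_/_]_(_ < N | _) _.
case: (X i) => /=; rewrite -/Q; ring.
Qed.

Lemma W_updw y w X i :
  W y (upd w i) X = (W y w X * (if X i then p else 1 - p))%R.
Proof.
rewrite /W (bigD1 i) //= [in RHS](bigD1 i) //=.
rewrite /upd eqxx.
have -> : \big[Rmult/1%R]_(j < N | j != i)
            wbit p (y j) (if j == i then (w j).+1 else w j) (X j) =
          \big[Rmult/1%R]_(j < N | j != i) wbit p (y j) (w j) (X j).
  by apply: eq_bigr => j /negbTE ->.
rewrite /wbit; set Q := \big[_/_]_(_ < N | _) _.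
case: (X i) => /=; rewrite -/Q; ring.
Qed.

Lemma PG_upd y w i :
  (PG (upd y i) w + PG y (upd w i) <= lam p K * PG y w)%R.
Proof.
rewrite /PG (bigD1 i) //= [X in (_ + X <= _)%R](bigD1 i) //= [in X in (_ <= X)%R](bigD1 i) //=.
rewrite /upd eqxx.
have -> : \big[Rmult/1%R]_(j < N | j != i)
            G p K (if j == i then (y j).+1 else y j) (w j) =
          \big[Rmult/1%R]_(j < N | j != i) G p K (y j) (w j).
  by apply: eq_bigr => j /negbTE ->.
have -> : \big[Rmult/1%R]_(j < N | j != i)
            G p K (y j) (if j == i then (w j).+1 else w j) =
          \big[Rmult/1%R]_(j < N | j != i) G p K (y j) (w j).
  by apply: eq_bigr => j /negbTE ->.
set Q := \big[Rmult/1%R]_(j < N | j != i) G p K (y j) (w j).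
have HQ : (0 <= Q)%R.
  rewrite /Q; apply: (big_ind (fun x => 0 <= x)%R); first lra.
    by move=> a b ha hb; apply Rmult_le_pos.
  by move=> j _; apply: G_pos.
have := G_step hp K (y i) (w i).
move/(Rmult_le_compat_r _ _ _ HQ). lra.
Qed.

Definition Csum (A : alg m) (c : R) (y w : 'I_N -> nat) : R :=
  \big[Rplus/0%R]_(X : {ffun 'I_N -> bool})
     (c * W y w X * success p ends (Real X) A)%R.

Lemma core (A : alg m) : forall B c y w, (queries A <= B)%N -> (0 <= c)%R ->
  (Csum A c y w <= c * lam p K ^ B * PG y w)%R.
Proof.
have hl := lam_ge1 hp K.
elim: A => [T|e k IH|q k IH] B c y w HB Hc.
-
  have hlB : (1 <= lam p K ^ B)%R by rewrite -(pow1 B); apply pow_incr; lra.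
  have hPG := PG_pos y w.
  rewrite /Csum /=.
  case: (pickP (fun X => spanning_tree ends T && (T \subset Real X))) => [X0 HX0|Hn].
  + rewrite (bigD1 X0) //= HX0 big1; last first.
      move=> X /negbTE HX; case: ifP => [/andP [h1 h2]|_]; last ring.
      case/andP: HX0 => _ h3.
      by rewrite (Huniq h1 h2 h3) eqxx in HX.
    have := W_le_PG y w X0; have := W_pos y w X0 => h1 h2.
    have : (c * W y w X0 <= c * PG y w)%R by apply Rmult_le_compat_l.
    have : (c * PG y w <= c * PG y w * lam p K ^ B)%R.
      rewrite -{1}(Rmult_1_r (c * PG y w)); apply Rmult_le_compat_l; first nra; lra.
    lra.
  + rewrite big1; last by move=> X _; rewrite Hn; ring.
    apply Rmult_le_pos; last done.
    apply Rmult_le_pos; first done; lra.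
-
  case: B HB => [|B] //= HB; rewrite ltnS geq_max in HB; case/andP: HB => HB1 HB2.
  have IH1 := IH true B; have IH2 := IH false B.
  rewrite /Csum /=.
  case Hk: (kind e) => [[i b]|].
  + have E : forall X, (c * W y w X * ((1 - p) * success p ends (Real X) (k (e \in Real X)) +
                  p * success p ends (Real X) (k (~~ (e \in Real X)))))%R =
             (c * W (if b then upd y i else y) (if b then w else upd w i) X *
                success p ends (Real X) (k true) +
              c * W (if b then y else upd y i) (if b then upd w i else w) X *
                success p ends (Real X) (k false))%R.
      move=> X; rewrite Hkind Hk; clear Hk.
      case: b; rewrite ?W_updy ?W_updw; case: (X i);
        rewrite ?eqb_tt ?eqb_ff ?eqb_tf ?eqb_ft /=; ring.
    rewrite (eq_bigr _ (fun X _ => E X)) rsum_split.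
    have := IH1 c (if b then upd y i else y) (if b then w else upd w i) HB1 Hc.
    have := IH2 c (if b then y else upd y i) (if b then upd w i else w) HB2 Hc.
    rewrite /Csum => h2 h1.
    have hu := PG_upd y w i.
    have hcl : (0 <= c * lam p K ^ B)%R.
      apply Rmult_le_pos => //; apply pow_le; lra.
    have H3 := Rmult_le_compat_l _ _ _ hcl hu.
    rewrite Rmult_plus_distr_l in H3.
    change (lam p K ^ B.+1)%R with (lam p K * lam p K ^ B)%R.
    have E4 : (c * lam p K ^ B * (lam p K * PG y w) = c * (lam p K * lam p K ^ B) * PG y w)%R by ring.
    clear E Hk; case: b h1 h2 => h1 h2; apply: Rle_trans (Rplus_le_compat _ _ _ _ h1 h2) _; lra.
  + have E : forall X, (c * W y w X * ((1 - p) * success p ends (Real X) (k (e \in Real X)) +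
                  p * success p ends (Real X) (k (~~ (e \in Real X)))))%R =
             ((c * (1 - p)) * W y w X * success p ends (Real X) (k true) +
              (c * p) * W y w X * success p ends (Real X) (k false))%R.
      by move=> X; rewrite Hkind Hk /=; ring.
    rewrite (eq_bigr _ (fun X _ => E X)) rsum_split.
    have := IH1 (c * (1 - p))%R y w HB1 ltac:(apply Rmult_le_pos; lra).
    have := IH2 (c * p)%R y w HB2 ltac:(apply Rmult_le_pos; lra).
    rewrite /Csum => h2 h1.
    have hPG := PG_pos y w.
    have hlB : (0 <= lam p K ^ B)%R by apply pow_le; lra.
    change (lam p K ^ B.+1)%R with (lam p K * lam p K ^ B)%R.
    have : (c * lam p K ^ B * PG y w <= c * (lam p K * lam p K ^ B) * PG y w)%R.
      have h0 : (0 <= c * lam p K ^ B * PG y w)%R by apply Rmult_le_pos => //; apply Rmult_le_pos.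
      nra.
    have : ((c * (1 - p)) * lam p K ^ B * PG y w + (c * p) * lam p K ^ B * PG y w
            = c * lam p K ^ B * PG y w)%R by ring.
    move=> ha hb; apply: Rle_trans (Rplus_le_compat _ _ _ _ h1 h2) _; lra.
-
  rewrite /= geq_max in HB; case/andP: HB => HB1 HB2.
  have hq := clamp01_bounds q.
  set cq := clamp01 q in hq *.
  have E : forall X, (c * W y w X * (cq * success p ends (Real X) (k true) +
                  (1 - cq) * success p ends (Real X) (k false)))%R =
             ((c * cq) * W y w X * success p ends (Real X) (k true) +
              (c * (1 - cq)) * W y w X * success p ends (Real X) (k false))%R.
    by move=> X; ring.
  rewrite /Csum /= (eq_bigr _ (fun X _ => E X)) rsum_split.
  have := IH true B (c * cq)%R y w HB1 ltac:(apply Rmult_le_pos; lra).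
  have := IH false B (c * (1 - cq))%R y w HB2 ltac:(apply Rmult_le_pos; lra).
  rewrite /Csum => h2 h1.
  have : ((c * cq) * lam p K ^ B * PG y w + (c * (1 - cq)) * lam p K ^ B * PG y w
            = c * lam p K ^ B * PG y w)%R by ring.
  move=> ha; apply: Rle_trans (Rplus_le_compat _ _ _ _ h1 h2) _; lra.
Qed.

End Core.

Section Arith.
Variables (N m : nat).
Hypothesis HNm : (3 * N <= m)%N.

Definition endsN (e : nat) : nat * nat :=
  if (e < 3 * N)%N then
    (if e %% 3 == 0 then (0, 2 * (e %/ 3) + 1)
     else if e %% 3 == 1 then (0, 2 * (e %/ 3) + 2)
     else (2 * (e %/ 3) + 1, 2 * (e %/ 3) + 2))%N
  else (0, e - N + 1)%N.

Lemma endsN_spec e : (e < m)%N ->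
  [/\ ((endsN e).1 < (endsN e).2)%N, ((endsN e).2 <= m - N)%N &
   ((e < 3 * N)%N /\
     ((e %% 3 = 0 /\ endsN e = (0, 2 * (e %/ 3) + 1)) \/
      (e %% 3 = 1 /\ endsN e = (0, 2 * (e %/ 3) + 2)) \/
      (e %% 3 = 2 /\ endsN e = (2 * (e %/ 3) + 1, 2 * (e %/ 3) + 2)))
    \/ ((3 * N <= e)%N /\ endsN e = (0, e - N + 1)))]%N.
Proof.
move=> He; rewrite /endsN.
case: ifP => H1.
- case: ifP => /eqP H2; first (split => /=; [lia|lia|left; split => //; left; split => //]).
  case: ifP => /eqP H3; first (split => /=; [lia|lia|left; split => //; right; left; split => //]).
  have H4 : e %% 3 = 2 by lia.
  split => /=; [lia|lia|left; split => //; right; right; split => //].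
- split => /=; [lia|lia|right; split => //; lia].
Qed.

Lemma endsN_inj e1 e2 : (e1 < m)%N -> (e2 < m)%N -> endsN e1 = endsN e2 -> e1 = e2.
Proof.
move=> h1 h2.
case: (endsN_spec h1) => _ _ [[a1 [[b1 ->]|[[b1 ->]|[b1 ->]]]]|[a1 ->]];
case: (endsN_spec h2) => _ _ [[a2 [[b2 ->]|[[b2 ->]|[b2 ->]]]]|[a2 ->]];
  case; lia.
Qed.

Lemma endsN_inc e i : (e < m)%N -> (i < N)%N ->
  ((endsN e).1 = 2 * i + 2 \/ (endsN e).2 = 2 * i + 2)%N ->
  (e = 3 * i + 1 \/ e = 3 * i + 2)%N.
Proof.
move=> h hi.
case: (endsN_spec h) => _ _ [[a1 [[b1 ->]|[[b1 ->]|[b1 ->]]]]|[a1 ->]] /=; lia.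
Qed.

Lemma endsN_c q : (q < N)%N -> endsN (3 * q) = (0, 2 * q + 1)%N.
Proof.
move=> hq; rewrite /endsN.
have -> : (3 * q < 3 * N)%N by lia.
have -> : (3 * q) %% 3 = 0 by lia.
have -> : (3 * q) %/ 3 = q by lia.
by [].
Qed.

Lemma endsN_a q : (q < N)%N -> endsN (3 * q + 1) = (0, 2 * q + 2)%N.
Proof.
move=> hq; rewrite /endsN.
have -> : (3 * q + 1 < 3 * N)%N by lia.
have -> : (3 * q + 1) %% 3 = 1 by lia.
have -> : (3 * q + 1) %/ 3 = q by lia.
by [].
Qed.

Lemma endsN_b q : (q < N)%N -> endsN (3 * q + 2) = (2 * q + 1, 2 * q + 2)%N.
Proof.
move=> hq; rewrite /endsN.
have -> : (3 * q + 2 < 3 * N)%N by lia.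
have -> : (3 * q + 2) %% 3 = 2 by lia.
have -> : (3 * q + 2) %/ 3 = q by lia.
by [].
Qed.

Lemma endsN_p e : (3 * N <= e)%N -> endsN e = (0, e - N + 1)%N.
Proof. by move=> h; rewrite /endsN ltnNge h. Qed.

End Arith.

Section Graph.
Variables (N' m : nat).
Local Notation N := N'.+1.
Hypothesis HNm : (3 * N <= m)%N.
Local Notation n' := (m - N)%N.

Definition gends (e : 'I_m) : 'I_n'.+1 * 'I_n'.+1 :=
  (inord (endsN N e).1, inord (endsN N e).2).

Definition gkind (e : 'I_m) : option ('I_N * bool) :=
  if (e < 3 * N)%N then
    (if e %% 3 == 1 then Some (inord (e %/ 3), true)
     else if e %% 3 == 2 then Some (inord (e %/ 3), false) else None)
  else None.

Definition RealX (X : {ffun 'I_N -> bool}) : {set 'I_m} :=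
  [set e : 'I_m | match gkind e with None => true | Some (i, b) => X i == b end].

Lemma RealX_kind e X : (e \in RealX X) =
  match gkind e with None => true | Some (i, b) => X i == b end.
Proof. by rewrite inE. Qed.

Lemma inord_inj a b : (a <= n')%N -> (b <= n')%N ->
  (inord a : 'I_n'.+1) = inord b -> a = b.
Proof. by move=> ha hb /(congr1 (@nat_of_ord _)); rewrite !inordK. Qed.

Lemma gsimple : simple_graph gends.
Proof.
split.
- move=> e [] /inord_inj.
  case: (endsN_spec HNm (ltn_ord e)) => h1 h2 _.
  move/(_ ltac:(lia) h2); lia.
- move=> e1 e2.
  case: (endsN_spec HNm (ltn_ord e1)) => a1 b1 _.
  case: (endsN_spec HNm (ltn_ord e2)) => a2 b2 _.
  case => E; have E1 := congr1 fst E; have E2 := congr1 snd E;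
    rewrite /= in E1 E2; move/inord_inj: E1 => h1; move/inord_inj: E2 => h2.
  + apply: val_inj; apply: (endsN_inj (m := m) HNm); [exact: ltn_ord|exact: ltn_ord|].
    move: (h1 ltac:(lia) ltac:(lia)) (h2 ltac:(lia) ltac:(lia)).
    by move=> x y; apply: injective_projections.
  + move: (h1 ltac:(lia) ltac:(lia)) (h2 ltac:(lia) ltac:(lia)); lia.
Qed.

Lemma edge_conn X (e : 'I_m) : e \in RealX X ->
  connect (adj gends (RealX X)) (inord (endsN N e).1) (inord (endsN N e).2).
Proof.
move=> he; apply: connect1; apply/existsP; exists e; rewrite he /=.
by rewrite /gends eqxx.
Qed.

Lemma conn_sym X : connect_sym (adj gends (RealX X)).
Proof. apply: sym_connect_sym; apply: adj_sym. Qed.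

Lemma conn0 X (u : 'I_n'.+1) : connect (adj gends (RealX X)) (inord 0) u.
Proof.
have hu := ltn_ord u.
have Eu : u = inord (nat_of_ord u) by rewrite inord_val.
set v := nat_of_ord u in hu Eu.
rewrite Eu.
have [v0|vpos] := eqVneq v 0; first by rewrite v0 connect0.
have cc : forall q, (q < N)%N -> connect (adj gends (RealX X)) (inord 0) (inord (2 * q + 1)).
  move=> q hq.
  have he : (3 * q < m)%N by lia.
  have := @edge_conn X (Ordinal he).
  rewrite /= (endsN_c HNm) //; apply.
  rewrite RealX_kind /gkind /=.
  have -> : (3 * q) %% 3 = 0 by lia.
  by case: ifP.
case: (leqP v (2 * N)) => hv.
- case: (boolP (odd v)) => ov.
  + have -> : v = 2 * (v %/ 2) + 1 by lia.
    apply: cc; lia.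
  + set q := (v %/ 2).-1.
    have hq : (q < N)%N by lia.
    have -> : v = 2 * q + 2 by lia.
    case hX: (X (inord q)).
    * have he : (3 * q + 1 < m)%N by lia.
      have := @edge_conn X (Ordinal he).
      rewrite /= (endsN_a HNm) //; apply.
      rewrite RealX_kind /gkind /=.
      have -> : (3 * q + 1 < 3 * N)%N by lia.
      have -> : (3 * q + 1) %% 3 = 1 by lia.
      have -> : (3 * q + 1) %/ 3 = q by lia.
      by rewrite /= hX.
    * have he : (3 * q + 2 < m)%N by lia.
      have := @edge_conn X (Ordinal he).
      rewrite /= (endsN_b HNm) // => h.
      apply: connect_trans (cc q hq) (h _).
      rewrite RealX_kind /gkind /=.
      have -> : (3 * q + 2 < 3 * N)%N by lia.
      have -> : (3 * q + 2) %% 3 = 2 by lia.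
      have -> : (3 * q + 2) %/ 3 = q by lia.
      by rewrite /= hX.
- have he : (v + N - 1 < m)%N by lia.
  have := @edge_conn X (Ordinal he).
  rewrite /= endsN_p; last by lia.
  have -> : (v + N - 1 - N + 1 = v)%N by lia.
  apply.
  rewrite RealX_kind /gkind /=.
  have -> : (v + N - 1 < 3 * N)%N = false by lia.
  by [].
Qed.

Lemma gconn X : spanning_connected gends (RealX X).
Proof.
apply/forallP => u; apply/forallP => v.
apply: connect_trans (conn0 X v).
by rewrite conn_sym; apply: conn0.
Qed.

Lemma noedge_connect (T : finType) (r : rel T) x y :
  (forall v, ~~ r x v) -> connect r x y -> y = x.
Proof.
move=> H /connectP [[|a q]] /=; first by move=> _ ->.
by case/andP => h; rewrite (negbTE (H a)) in h.
Qed.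

Lemma guniq T X X' : spanning_tree gends T -> T \subset RealX X ->
  T \subset RealX X' -> X = X'.
Proof.
case/andP => Tc _ HX HX'.
apply/ffunP => i; apply/eqP/negP => Hne.
have hi := ltn_ord i.
set y : 'I_n'.+1 := inord (2 * i + 2).
have Hno : forall v, ~~ adj gends T y v.
  move=> v; apply/negP => /existsP [e /andP [eT He]].
  have he := ltn_ord e.
  case: (endsN_spec HNm he) => h1 h2 _.
  have Hinc : ((endsN N e).1 = 2 * i + 2 \/ (endsN N e).2 = 2 * i + 2)%N.
    case/orP: He => /eqP [] E1 E2.
    + left; apply: inord_inj E1; lia.
    + right; apply: inord_inj E2; lia.
  have Hk : gkind e = Some (i, true) \/ gkind e = Some (i, false).
    rewrite /gkind.
    case: (endsN_inc HNm he hi Hinc) => ->.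
    + have -> : (3 * i + 1 < 3 * N)%N by lia.
      have -> : (3 * i + 1) %% 3 = 1 by lia.
      have -> : (3 * i + 1) %/ 3 = i by lia.
      by rewrite inord_val; left.
    + have -> : (3 * i + 2 < 3 * N)%N by lia.
      have -> : (3 * i + 2) %% 3 = 2 by lia.
      have -> : (3 * i + 2) %/ 3 = i by lia.
      by rewrite inord_val; right.
  have e1 := subsetP HX e eT; have e2 := subsetP HX' e eT.
  rewrite !RealX_kind in e1 e2.
  apply: Hne; case: Hk => Hk; rewrite Hk in e1 e2;
    by rewrite (eqP e1) (eqP e2).
have := forallP Tc y => /forallP /(_ (inord 0)) /(noedge_connect Hno) /inord_inj.
move/(_ ltac:(lia) ltac:(lia)); lia.
Qed.

End Graph.

Lemma rprod_const_ord k (a : R) : \big[Rmult/1%R]_(i < k) a = (a ^ k)%R.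
Proof.
rewrite big_const_ord; elim: k => [|k IH] //=.
by rewrite IH.
Qed.

Lemma expn_pow a b : expn a b = Nat.pow a b.
Proof. elim: b => //= b IH. by rewrite expnS IH. Qed.

Lemma INR_expn2 k : INR (2 ^ k)%N = (2 ^ k)%R.
Proof. rewrite pow_INR; replace (INR 2) with 2%R by (simpl; lra); done. Qed.

Lemma ln2_lt1 : (ln 2 < 1)%R.
Proof.
have h : (2 < exp 1)%R by have := exp_ineq1 1 ltac:(lra); lra.
have := ln_increasing 2 (exp 1) ltac:(lra) h; rewrite ln_exp; lra.
Qed.

Theorem lower_bound (p : R) (hp : (0 < p < 1/2)%R) :
  forall delta : R, (0 < delta < 1/2)%R ->
   exists (c : R) (M : nat), (0 < c)%R /\
     forall m : nat, (M <= m)%N ->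
       exists (n : nat) (ends : 'I_m -> 'I_n * 'I_n),
         simple_graph ends /\
         (exists Real0 : {set 'I_m}, spanning_connected ends Real0) /\
         forall A : alg m,
           (INR (queries A) < c * INR m * ln (INR m))%R ->
           exists Real : {set 'I_m},
             spanning_connected ends Real /\
             (success p ends Real A < 1 - delta)%R.
Proof.
move=> delta hd.
have hr := rho_bounds hp.
set r := rho p in hr *.
set t := ((1 - r) / r)%R.
have ht : (0 < t)%R by rewrite /t; apply Rdiv_lt_0_compat; lra.
have [L0 HL0] := INR_archimed 1 (/ (r * r)) ltac:(lra).
set L := L0.+1.
have hL : (1 <= 2 ^ L * (r * r))%R.
  have h1 : (INR L <= 2 ^ L)%R.
    rewrite -INR_expn2; apply le_INR; apply/leP; rewrite -expn_pow; exact: ltnW (ltn_expl _ (ltnSn 1)).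
  have h2 : (INR L0 < INR L)%R by apply lt_INR; apply/ltP; lia.
  have hrr : (0 < r * r)%R by nra.
  have : (/ (r * r) * (r * r) = 1)%R by field; lra.
  nra.
have hLpos : (0 < INR L)%R by apply lt_0_INR; apply/ltP; lia.
have [M2 HM2] := INR_archimed 1 (64 / (t * t)) ltac:(lra).
exists (/ (16 * INR L))%R, (maxn (maxn 8 (2 ^ L)) M2).
split; first by apply Rinv_0_lt_compat; lra.
move=> m Hm.
have Hm8 : (8 <= m)%N by move: Hm; rewrite !geq_max => /andP [/andP [] ] //.
have HmL : (2 ^ L <= m)%N by move: Hm; rewrite !geq_max => /andP [/andP [] ] //.
have HmM2 : (M2 <= m)%N by move: Hm; rewrite !geq_max => /andP [] //.
set N' := (m %/ 3).-1.
have HNm : (3 * N'.+1 <= m)%N by rewrite /N'; lia.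
have H4N : (m <= 4 * N'.+1)%N by rewrite /N'; lia.
exists (m - N'.+1).+1, (gends N' (m := m)).
split; first exact: gsimple HNm.
split; first by exists (@RealX N' m [ffun=> true]); apply: gconn.
move=> A HA.
set B := queries A.
set lg := Nat.log2 m.
set K := (lg %/ L)%N.
have Hlg : (2 ^ lg <= m)%N /\ (m < 2 ^ lg.+1)%N.
  have [h1 h2] := Nat.log2_spec m ltac:(apply/ltP; lia).
  by split; apply/leP.
have HLlg : (L <= lg)%N.
  have : (Nat.log2 (2 ^ L) <= lg)%coq_nat by apply Nat.log2_le_mono; apply/leP.
  rewrite Nat.log2_pow2; last lia.
  by move/leP.
have HK1 : (1 <= K)%N by rewrite /K; lia.
have HLK : (L * K <= lg)%N by rewrite /K; lia.
have hL1 : (1 <= L)%N by rewrite /L.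
have HLK2 : (lg.+1 <= 2 * L * K)%N.
  have e := divn_eq lg L; have rr := ltn_pmod lg hL1.
  rewrite -/K in e.
  have : (L <= L * K)%N by rewrite -{1}(muln1 L) leq_mul2l HK1 orbT.
  nia.
have hm0 : (0 < INR m)%R by apply lt_0_INR; apply/ltP; lia.
have R1 : (ln (INR m) <= INR lg.+1)%R.
  have h : (INR m < 2 ^ lg.+1)%R.
    rewrite -INR_expn2; apply lt_INR; apply/ltP; case: Hlg => _ h; exact: h.
  have := ln_increasing _ _ hm0 h; rewrite ln_pow; last lra.
  have := ln2_lt1; have := pos_INR lg.+1; nra.
have R2 : (2 * B < N'.+1 * K)%N.
  apply/ltP; apply INR_lt.
  rewrite !mult_INR.
  have hK : (1 <= INR K)%R by apply (le_INR 1); apply/leP.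
  have hlgK : (INR lg.+1 <= 2 * INR L * INR K)%R.
    have := le_INR _ _ (elimT leP HLK2); rewrite !mult_INR; replace (INR 2) with 2%R by (simpl; lra); lra.
  have hmN : (INR m <= 4 * INR N'.+1)%R.
    have := le_INR _ _ (elimT leP H4N); rewrite mult_INR; replace (INR 4) with 4%R by (simpl; lra); lra.
  have hln : (ln (INR m) <= 2 * INR L * INR K)%R by lra.
  have hlnpos : (0 <= ln (INR m))%R.
    rewrite -ln_1; left; apply ln_increasing; first lra.
    have := lt_INR 1 m ltac:(apply/ltP; lia); rewrite /=; lra.
  have hB : (INR B < / (16 * INR L) * INR m * (2 * INR L * INR K))%R.
    apply: (Rlt_le_trans _ _ _ HA).
    rewrite !Rmult_assoc; apply Rmult_le_compat_l.
      by apply Rlt_le, Rinv_0_lt_compat; lra.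
    apply Rmult_le_compat_l; lra.
  have E : (/ (16 * INR L) * INR m * (2 * INR L * INR K) = INR m * INR K / 8)%R.
    by field; lra.
  rewrite E in hB.
  replace (INR 2) with 2%R by (simpl; lra).
  have : (INR m * INR K <= 4 * INR N'.+1 * INR K)%R.
    apply Rmult_le_compat_r; lra.
  lra.
set a := (r ^ K)%R.
have ha : (0 < a)%R by apply pow_lt; lra.
have R3 : (1 <= INR m * (a * a))%R.
  have h1 : (1 <= (2 ^ L * (r * r)) ^ K)%R by rewrite -(pow1 K); apply pow_incr; lra.
  rewrite Rpow_mult_distr -pow_mult Rpow_mult_distr in h1.
  have h2 : (2 ^ (L * K) <= INR m)%R.
    rewrite -INR_expn2; apply le_INR; apply/leP.
    apply: leq_trans (proj1 Hlg); rewrite -!expn_pow leq_exp2l //.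
  have h3 : (0 <= r ^ K * r ^ K)%R by nra.
  have := Rmult_le_compat_r _ _ _ h3 h2.
  rewrite /a; rewrite multE in h1; lra.
have Heps : epsK p K = (a * t)%R by rewrite /epsK /t /a -/r; field; lra.
have R4 : (2 <= epsK p K * INR (N'.+1 * K))%R.
  rewrite Heps mult_INR.
  set y := (a * INR N'.+1 * t)%R.
  have hN : (0 < INR N'.+1)%R by apply lt_0_INR; lia.
  have hy : (0 <= y)%R by rewrite /y; apply Rmult_le_pos; [nra|lra].
  have hmN : (INR m <= 4 * INR N'.+1)%R.
    have := le_INR _ _ (elimT leP H4N); rewrite mult_INR; replace (INR 4) with 4%R by (simpl; lra); lra.
  have hM : (64 / (t * t) < INR m)%R.
    have := le_INR _ _ (elimT leP HmM2); lra.
  have hy2 : (4 <= y * y)%R.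
    have e1 : (y * y = (a * a) * (INR N'.+1 * INR N'.+1) * (t * t))%R by rewrite /y; ring.
    have htt : (0 < t * t)%R by nra.
    have e2 : (64 / (t * t) * (t * t) = 64)%R by field; lra.
    have h3 : (INR m * INR m <= 16 * (INR N'.+1 * INR N'.+1))%R by nra.
    have h4 : (INR m * (a * a) * (INR N'.+1 * INR N'.+1) >= INR N'.+1 * INR N'.+1)%R by nra.
    have h5 : (INR m * (a * a) * (INR N'.+1 * INR N'.+1) * 16 >= INR m * INR m)%R by nra.
    have h6 : (16 * (a * a) * (INR N'.+1 * INR N'.+1) >= INR m)%R.
      apply Rle_ge; apply (Rmult_le_reg_l (INR m)); first lra. nra.
    have h7 : (INR m * (t * t) > 64)%R by nra.
    nra.
  have hy2' : (2 <= y)%R by nra.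
  have hK : (1 <= INR K)%R by apply (le_INR 1); apply/leP.
  have : (a * t * (INR N'.+1 * INR K) = y * INR K)%R by rewrite /y; ring.
  nra.
set lm := lam p K.
have hl : (1 <= lm)%R := lam_ge1 hp K.
have he := eps_pos hp K.
set D := (N'.+1 * K - B)%N.
have HD : (N'.+1 * K = B + D)%N by rewrite /D; lia.
have R5 : (2 * lm ^ B <= lm ^ (N'.+1 * K))%R.
  rewrite HD pow_add.
  have hD : (2 <= lm ^ D)%R.
    have := poly D (epsK p K) he.
    have : (INR (N'.+1 * K) <= 2 * INR D)%R.
      replace 2%R with (INR 2) by (simpl; lra); rewrite -mult_INR; apply le_INR; apply/leP; lia.
    rewrite /lm /lam; nra.
  have := Rmult_le_compat_l (lm ^ B) _ _ (pow_le lm B ltac:(lra)) hD; lra.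
have Hcore := core hp K (@RealX_kind N' m) (@guniq N' m HNm) (A := A) (B := B) (c := 1%R)
                 (fun _ : 'I_N'.+1 => O) (fun _ : 'I_N'.+1 => O) (leqnn B) Rle_0_1.
rewrite /Csum /PG in Hcore.
have E1 : forall X : {ffun 'I_N'.+1 -> bool}, W p (fun _ : 'I_N'.+1 => O) (fun _ : 'I_N'.+1 => O) X = 1%R.
  move=> X; rewrite /W big1 // => i _; rewrite /wbit; case: (X i); rewrite /=; ring.
have E2 : \big[Rmult/1%R]_(i < N'.+1) G p K ((fun _ : 'I_N'.+1 => 0%N) i) ((fun _ : 'I_N'.+1 => 0%N) i)
          = ((2 / lm ^ K) ^ N'.+1)%R.
  by rewrite rprod_const_ord G00.
rewrite E2 in Hcore.
case: (classic (exists X : {ffun 'I_N'.+1 -> bool},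
          (success p (gends N' (m:=m)) (@RealX N' m X) A < 1 - delta)%R)) => [[X HX]|Hno].
  by exists (@RealX N' m X); split => //; apply: gconn.
exfalso.
have Hall : forall X : {ffun 'I_N'.+1 -> bool},
    (1 - delta <= 1 * W p (fun _ : 'I_N'.+1 => O) (fun _ : 'I_N'.+1 => O) X *
                    success p (gends N' (m:=m)) (@RealX N' m X) A)%R.
  move=> X; rewrite E1; apply Rnot_lt_le => h; apply: Hno; exists X; lra.
have Hs := rsum_le Hall.
rewrite rsum_const card_ffun card_bool card_ord in Hs.
rewrite expn_pow pow_INR in Hs; replace (INR 2) with 2%R in Hs by (simpl; lra).
have h2N : (0 < 2 ^ N'.+1)%R by apply pow_lt; lra.
have hlK : (0 < lm ^ K)%R by apply pow_lt; lra.
have E3 : ((2 / lm ^ K) ^ N'.+1 = 2 ^ N'.+1 / lm ^ (N'.+1 * K))%R.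
  rewrite /Rdiv Rpow_mult_distr -pow_inv -pow_mult pow_inv multE; congr (_ * / _ ^ _)%R; apply: mulnC.
rewrite E3 in Hcore.
have hlNK : (0 < lm ^ (N'.+1 * K))%R by apply pow_lt; lra.
have hlB : (0 < lm ^ B)%R by apply pow_lt; lra.
have : (1 * lm ^ B * (2 ^ N'.+1 / lm ^ (N'.+1 * K)) <= 2 ^ N'.+1 / 2)%R.
  apply (Rmult_le_reg_r (lm ^ (N'.+1 * K))) => //.
  have e4 : (1 * lm ^ B * (2 ^ N'.+1 / lm ^ (N'.+1 * K)) * lm ^ (N'.+1 * K) = lm ^ B * 2 ^ N'.+1)%R
    by field; lra.
  rewrite e4. nra.
move=> hfin.
have H := Rle_trans _ _ _ Hs Hcore. rewrite -/lm in H.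
have : (2 ^ N'.+1 / 2 < 2 ^ N'.+1 * (1 - delta))%R by nra.
lra.
Qed.


Theorem theorem2 (p : R) (hp : (0 < p < 1/2)%R) :
  (* upper bound: O(m log m) queries, success with high probability *)
  (exists (C : R) (M : nat) (eps : nat -> R),
     Un_cv eps 0 /\
     forall (n m : nat) (ends : 'I_m -> 'I_n * 'I_n),
       simple_graph ends -> (M <= m)%N ->
       exists A : alg m,
         (INR (queries A) <= C * INR m * ln (INR m))%R /\
         forall Real : {set 'I_m}, spanning_connected ends Real ->
           (1 - eps m <= success p ends Real A)%R)
  /\
  (* lower bound: Omega(m log m) queries for any constant failure prob. *)
  (forall delta : R, (0 < delta < 1/2)%R ->
   exists (c : R) (M : nat), (0 < c)%R /\
     forall m : nat, (M <= m)%N ->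
       exists (n : nat) (ends : 'I_m -> 'I_n * 'I_n),
         simple_graph ends /\
         (exists Real0 : {set 'I_m}, spanning_connected ends Real0) /\
         forall A : alg m,
           (INR (queries A) < c * INR m * ln (INR m))%R ->
           exists Real : {set 'I_m},
             spanning_connected ends Real /\
             (success p ends Real A < 1 - delta)%R).
Proof.
split; [exact: upper_bound | exact: lower_bound].
Qed.
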